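(* Let $X$ be a spectral space whose specialization order is total, and let $Y\subseteq X$. Then: (1) $\mathrm{Cl}^\mathrm{cons}(Y)=Y_\infty\cup Y_{(\infty)}$; (2) $Y$ is closed in the constructible topology if and only if the supremum and the infimum of every nonempty subset of $Y$ belong to $Y$.
   Context: A spectral space is a topological space homeomorphic to the prime spectrum of a commutative ring with the Zariski topology. The specialization order is $x\leq y$ iff $y\in\mathrm{Cl}(\{x\})$; suprema and infima refer to it. The constructible topology is the coarsest topology in which all open quasi-compact subsets of $X$ are clopen; $\mathrm{Cl}^\mathrm{cons}$ is closure in it. $Y_\infty$ (resp. $Y_{(\infty)}$) is the set of suprema (resp. infima) in $X$ of nonempty subsets of $Y$ (whenever they exist). *)

(* Defs.v *)
From HB Require Import structures.
From mathcomp Require Import all_boot all_order all_algebra.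
From mathcomp Require Import all_classical topology.
Set Implicit Arguments. Unset Strict Implicit. Unset Printing Implicit Defensive.
Import GRing.Theory.
Local Open Scope classical_set_scope.
Local Open Scope ring_scope.

Definition prime_ideal (R : comPzRingType) (P : set R) : Prop :=
  [/\ P 0,
      (forall x y, P x -> P y -> P (x + y)),
      (forall x y, P y -> P (x * y)),
      ~ P 1
    & (forall x y, P (x * y) -> P x \/ P y)].

Definition spec (R : comPzRingType) : Type := {P : set R | prime_ideal P}.

Definition zariski_basic (R : comPzRingType) (f : R) : set (spec R) :=
  [set P | ~ (proj1_sig P) f].

Definition zariski_open (R : comPzRingType) (V : set (spec R)) : Prop :=
  forall P, V P -> exists f : R, zariski_basic f P /\ zariski_basic f `<=` V.

Definition spectral_space (X : topologicalType) : Prop :=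
  exists (R : comPzRingType) (h : X -> spec R),
    bijective h /\ (forall U : set X, open U <-> zariski_open (h @` U)).

Definition spec_le (X : topologicalType) (x y : X) : Prop :=
  closure [set x] y.

Definition spec_total (X : topologicalType) : Prop :=
  forall x y : X, spec_le x y \/ spec_le y x.

Definition is_sup (X : topologicalType) (S : set X) (s : X) : Prop :=
  (forall z, S z -> spec_le z s) /\
  (forall u, (forall z, S z -> spec_le z u) -> spec_le s u).

Definition is_inf (X : topologicalType) (S : set X) (s : X) : Prop :=
  (forall z, S z -> spec_le s z) /\
  (forall u, (forall z, S z -> spec_le u z) -> spec_le u s).

(* Y_oo : suprema in X of nonempty subsets of Y *)
Definition sups_of (X : topologicalType) (Y : set X) : set X :=
  [set s | exists S : set X, [/\ S `<=` Y, S !=set0 & is_sup S s]].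

(* Y_(oo) : infima in X of nonempty subsets of Y *)
Definition infs_of (X : topologicalType) (Y : set X) : set X :=
  [set s | exists S : set X, [/\ S `<=` Y, S !=set0 & is_inf S s]].

Definition cons_subbasic (X : topologicalType) (B : set X) : Prop :=
  exists U : set X, [/\ open U, compact U & (B = U \/ B = ~` U)].

(* open sets of the topology generated by this subbasis (the coarsest
   topology in which every open quasi-compact set is clopen): every
   point of W has a neighbourhood that is a finite intersection of
   subbasic sets contained in W. *)
Definition cons_open (X : topologicalType) (W : set X) : Prop :=
  forall x, W x -> exists Bs : seq (set X),
    (forall B, B \in Bs -> cons_subbasic B /\ B x) /\
    (fun y => forall B, B \in Bs -> B y) `<=` W.

Definition cons_closed (X : topologicalType) (C : set X) : Prop :=
  cons_open (~` C).

Definition cons_closure (X : topologicalType) (Y : set X) : set X :=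
  \bigcap_(C in [set C : set X | cons_closed C /\ Y `<=` C]) C.

(* Main.v *)
Require Import Defs.
From HB Require Import structures.
From mathcomp Require Import all_boot all_order all_algebra.
From mathcomp Require Import all_classical topology.
From Stdlib Require Import Classical.
Local Open Scope classical_set_scope.
Set Implicit Arguments. Unset Strict Implicit.

Section Topo.
Context {X : topologicalType}.

Lemma spec_le_refl (x : X) : spec_le x x.
Proof. exact: subset_closure. Qed.

Lemma spec_le_trans (x y z : X) : spec_le x y -> spec_le y z -> spec_le x z.
Proof.
move=> hxy hyz.
have sub : [set y] `<=` closure [set x] by move=> w ->.
have := closureS sub hyz.
by move/(closed_closure (A := [set x])).
Qed.

Lemma open_down (a b : X) (U : set X) : spec_le a b -> open U -> U b -> U a.
Proof.
move=> hab oU Ub.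
have nb : nbhs b U by apply: open_nbhs_nbhs; split.
by have [z [-> Uz]] := hab U nb.
Qed.

Lemma sup_compact (htot : spec_total X) (U : set X) (S : set X) (x : X) :
  open U -> compact U -> S `<=` U -> S !=set0 -> is_sup S x -> U x.
Proof.
move=> oU cU SU [s0 Ss0] [ub lub].
pose F := filter_from S (fun s => U `&` closure [set s]).
have FF : Filter F.
  apply: filter_from_filter; first by exists s0.
  move=> i j Si Sj; case: (htot i j) => hij.
  - exists j => // w [Uw cw]; split; split => //.
    exact: spec_le_trans hij cw.
  - exists i => // w [Uw cw]; split; split => //.
    exact: spec_le_trans hij cw.
have PF : ProperFilter F.
  apply: filter_from_proper => // s Ss; exists s; split; first exact: SU.
  exact: spec_le_refl.
have FU : F U by exists s0 => // w [].
have [p [Up clp]] := cU F PF FU.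
have ubp : forall z, S z -> spec_le z p.
  move=> z Sz; apply: (closed_closure (A := [set z])) => B nB.
  have FB : F (U `&` closure [set z]) by exists z.
  have [w [[_ cw] Bw]] := clp _ _ FB nB.
  by exists w.
exact: open_down (lub _ ubp) oU Up.
Qed.

End Topo.

Section Ring.
Variables (X : topologicalType) (R : comPzRingType) (h : X -> spec R).
Variables (g : spec R -> X) (hg : cancel h g) (gh : cancel g h).
Hypothesis hopen : forall U : set X, open U <-> zariski_open (h @` U).
Hypothesis htot : spec_total X.

Let I (z : X) : set R := proj1_sig (h z).

Lemma Iprime z : prime_ideal (I z).
Proof. exact: proj2_sig (h z). Qed.

Lemma h_inj : injective h.
Proof. exact: can_inj hg. Qed.

Lemma exI (P : set R) : prime_ideal P -> exists m, I m = P.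
Proof.
move=> pP; exists (g (exist _ P pP : spec R)); by rewrite /I (gh (exist _ P pP : spec R)).
Qed.

Definition O (f : R) : set X := [set z | ~ I z f].

Lemma open_O f : open (O f).
Proof.
apply/hopen => _ [z Oz <-]; exists f; split => // Q DQ.
exists (g Q); last by rewrite gh.
by rewrite /O /I /= gh.
Qed.

Lemma open_in (U : set X) x : open U -> U x -> exists f, ~ I x f /\ O f `<=` U.
Proof.
move=> /hopen oU Ux.
have [f [Df sub]] := oU (h x) (ex_intro2 _ _ x Ux erefl).
exists f; split => // z Oz.
have [u Uu hu] := sub (h z) Oz.
by rewrite -(h_inj hu).
Qed.

Lemma le_iff x y : spec_le x y <-> I x `<=` I y.
Proof.
split.
- move=> hxy r Ixr; apply: NNPP => nIy.
  have Oy : O r y by [].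
  exact: (open_down hxy (open_O r) Oy) Ixr.
- move=> sub B; rewrite nbhsE => -[V [oV Vy] VB].
  have [f [nf sf]] := open_in oV Vy.
  exists x; split => //; apply: VB; apply: sf => Ixf; exact: nf (sub _ Ixf).
Qed.

Lemma chain x y : I x `<=` I y \/ I y `<=` I x.
Proof. by case: (htot x y) => /le_iff; [left|right]. Qed.

Lemma union_prime (T : set X) : T !=set0 ->
  prime_ideal [set r | exists z, T z /\ I z r].
Proof.
move=> [z0 Tz0]; split.
- by exists z0; split => //; case: (Iprime z0).
- move=> a b [z1 [T1 a1]] [z2 [T2 b2]].
  case: (chain z1 z2) => s.
  + by exists z2; split => //; case: (Iprime z2) => _ Hadd _ _ _; apply: Hadd => //; apply: s.
  + by exists z1; split => //; case: (Iprime z1) => _ Hadd _ _ _; apply: Hadd => //; apply: s.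
- move=> a b [z [Tz bz]]; exists z; split => //; by case: (Iprime z) => _ _ Hm _ _; apply: Hm.
- by move=> [z [_ z1]]; case: (Iprime z) => _ _ _ H1 _.
- move=> a b [z [Tz abz]]; case: (Iprime z) => _ _ _ _ Hp.
  by case: (Hp _ _ abz) => H; [left|right]; exists z.
Qed.

Lemma inter_prime (T : set X) : T !=set0 ->
  prime_ideal [set r | forall z, T z -> I z r].
Proof.
move=> [z0 Tz0]; split.
- by move=> z _; case: (Iprime z).
- by move=> a b Ha Hb z Tz; case: (Iprime z) => _ Hadd _ _ _; apply: Hadd; auto.
- by move=> a b Hb z Tz; case: (Iprime z) => _ _ Hm _ _; apply: Hm; auto.
- by move=> H; case: (Iprime z0) => _ _ _ H1 _; apply: H1; apply: H.
- move=> a b Hab; apply: NNPP => nn.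
  have [na nb] : ~ (forall z, T z -> I z a) /\ ~ (forall z, T z -> I z b) by tauto.
  have [z1 n1] := not_all_ex_not _ _ na.
  have [z2 n2] := not_all_ex_not _ _ nb.
  have [T1 a1] : T z1 /\ ~ I z1 a by tauto.
  have [T2 b2] : T z2 /\ ~ I z2 b by tauto.
  case: (chain z1 z2) => s.
  + case: (Iprime z1) => _ _ _ _ Hp; case: (Hp _ _ (Hab z1 T1)) => //.
    by move=> /s.
  + case: (Iprime z2) => _ _ _ _ Hp; case: (Hp _ _ (Hab z2 T2)) => //.
    by move=> /s.
Qed.


Lemma compact_O f : compact (O f).
Proof.
move=> F PF FO.
have [z0 Oz0] := filter_ex FO.
have [m Im] := exI (union_prime (T := O f) (ex_intro _ z0 Oz0)).
have lem : forall z, O f z -> spec_le z m.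
  by move=> z Oz; apply/le_iff; rewrite Im => r Ir; exists z.
exists m; split.
- rewrite /O /= Im => -[z [Oz Izf]]; exact: Oz Izf.
- move=> A B FA; rewrite nbhsE => -[V [oV Vm] VB].
  have FV : F V by apply: filterS FO => z Oz; exact: open_down (lem z Oz) oV Vm.
  have [w [Aw Vw]] := filter_ex (filterI FA FV).
  by exists w; split => //; exact: VB.
Qed.

Lemma inf_open (U S : set X) x : open U -> S !=set0 -> is_inf S x -> U x ->
  exists s, S s /\ U s.
Proof.
move=> oU S0 [lb glb] Ux; apply: NNPP => nex.
have [f [nf sf]] := open_in oU Ux.
have fS : forall s, S s -> I s f.
  move=> s Ss; apply: NNPP => nIs; apply: nex; exists s; split => //; exact: sf.
have [m Im] := exI (inter_prime S0).
have : spec_le m x.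
  apply: glb => z Sz; apply/le_iff; rewrite Im => r Hr; exact: Hr z Sz.
move/le_iff => sub; apply: nf; apply: sub; rewrite Im; exact: fS.
Qed.

Lemma a_lemma (Y : set X) x : ~ sups_of Y x -> ~ infs_of Y x ->
  exists Bs : seq (set X), (forall B, B \in Bs -> cons_subbasic B /\ B x) /\
    (forall y, Y y -> ~ (forall B, B \in Bs -> B y)).
Proof.
move=> nsup ninf.
have [f [Ixf Hf]] : exists f, I x f /\ forall y, Y y -> spec_le y x -> ~ I y f.
  apply: NNPP => nH; apply: nsup.
  have H : forall f, I x f -> exists y, [/\ Y y, spec_le y x & I y f].
    move=> f Ixf; apply: NNPP => ne; apply: nH; exists f; split => // y Yy le Iyf.
    by apply: ne; exists y.
  exists [set y | Y y /\ spec_le y x]; split.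
  - by move=> y [].
  - have P0 : I x 0%R by case: (Iprime x).
    by have [y [Yy le _]] := H _ P0; exists y.
  - split; first by move=> z [].
    move=> u ub; apply/le_iff => r Ixr; have [y [Yy le Iyr]] := H r Ixr.
    by move/le_iff: (ub y (conj Yy le)); apply.
have [g' [Ixg Hg]] : exists g', ~ I x g' /\ forall y, Y y -> spec_le x y -> I y g'.
  apply: NNPP => nH; apply: ninf.
  have H : forall g', (forall y, Y y -> spec_le x y -> I y g') -> I x g'.
    move=> g' Hy; apply: NNPP => nI; apply: nH; exists g'; split => //.
  exists [set y | Y y /\ spec_le x y]; split.
  - by move=> y [].
  - apply: NNPP => ne; have P1 : ~ I x 1%R by case: (Iprime x).
    apply: P1; apply: H => y Yy le; exfalso; apply: ne; by exists y.
  - split; first by move=> z [].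
    move=> u lb; apply/le_iff => r Iur; apply: H => y Yy le.
    by move/le_iff: (lb y (conj Yy le)); apply.
exists [:: ~` O f; O g']; split.
- move=> B; rewrite !inE => /orP[/eqP->|/eqP->].
  + split; last by move=> /= nI; exact: nI Ixf.
    by exists (O f); split; [exact: open_O|exact: compact_O|right].
  + split => //.
    by exists (O g'); split; [exact: open_O|exact: compact_O|left].
- move=> y Yy HB.
  have h1 : (~` O f) y by apply: HB; rewrite inE eqxx.
  have h2 : O g' y by apply: HB; rewrite !inE eqxx orbT.
  case: (htot y x) => le.
  + by apply: h1 => Iyf; exact: Hf y Yy le Iyf.
  + by apply: h2; exact: Hg y Yy le.
Qed.

Lemma b_sup (S : set X) x (Bs : seq (set X)) : S !=set0 -> is_sup S x ->
  (forall B, B \in Bs -> cons_subbasic B /\ B x) ->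
  exists s0, S s0 /\ forall s, S s -> spec_le s0 s -> forall B, B \in Bs -> B s.
Proof.
move=> [z0 Sz0] hsup; elim: Bs => [|B0 Bs IH] HB.
  by exists z0; split => // s _ _ B; rewrite in_nil.
have [s0 [Ss0 Hs0]] : exists s0, S s0 /\ forall s, S s -> spec_le s0 s -> forall B, B \in Bs -> B s.
  by apply: IH => B hB; apply: HB; rewrite inE hB orbT.
have [[U [oU cU EB]] B0x] := HB B0 (mem_head _ _).
case: EB => EB; rewrite EB in B0x.
  exists s0; split => // s Ss le B; rewrite inE => /orP[/eqP->|hB]; last exact: Hs0.
  rewrite EB; exact: open_down (hsup.1 s Ss) oU B0x.
have [s1 [Ss1 nU1]] : exists s1, S s1 /\ ~ U s1.
  apply: NNPP => ne; apply: B0x; apply: (sup_compact htot oU cU _ (ex_intro _ z0 Sz0) hsup).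
  by move=> s Ss; apply: NNPP => nUs; apply: ne; exists s; split.
have [s2 [Ss2 l02 l12]] : exists s2, [/\ S s2, spec_le s0 s2 & spec_le s1 s2].
  case: (htot s0 s1) => le.
  - by exists s1; split => //; exact: spec_le_refl.
  - by exists s0; split => //; exact: spec_le_refl.
exists s2; split => // s Ss le B; rewrite inE => /orP[/eqP->|hB].
- rewrite EB => Us; apply: nU1; exact: open_down (spec_le_trans l12 le) oU Us.
- exact: Hs0 s Ss (spec_le_trans l02 le) B hB.
Qed.

Lemma b_inf (S : set X) x (Bs : seq (set X)) : S !=set0 -> is_inf S x ->
  (forall B, B \in Bs -> cons_subbasic B /\ B x) ->
  exists s0, S s0 /\ forall s, S s -> spec_le s s0 -> forall B, B \in Bs -> B s.
Proof.
move=> S0 hinf; have [z0 Sz0] := S0; elim: Bs => [|B0 Bs IH] HB.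
  by exists z0; split => // s _ _ B; rewrite in_nil.
have [s0 [Ss0 Hs0]] : exists s0, S s0 /\ forall s, S s -> spec_le s s0 -> forall B, B \in Bs -> B s.
  by apply: IH => B hB; apply: HB; rewrite inE hB orbT.
have [[U [oU cU EB]] B0x] := HB B0 (mem_head _ _).
case: EB => EB; rewrite EB in B0x; last first.
  exists s0; split => // s Ss le B; rewrite inE => /orP[/eqP->|hB]; last exact: Hs0.
  rewrite EB => Us; apply: B0x; exact: open_down (hinf.1 s Ss) oU Us.
have [s1 [Ss1 U1]] := inf_open oU S0 hinf B0x.
have [s2 [Ss2 l02 l12]] : exists s2, [/\ S s2, spec_le s2 s0 & spec_le s2 s1].
  case: (htot s0 s1) => le.
  - by exists s0; split => //; exact: spec_le_refl.
  - by exists s1; split => //; exact: spec_le_refl.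
exists s2; split => // s Ss le B; rewrite inE => /orP[/eqP->|hB].
- rewrite EB; exact: open_down (spec_le_trans le l12) oU U1.
- exact: Hs0 s Ss (spec_le_trans le l02) B hB.
Qed.

Lemma b_lemma (Y : set X) x (Bs : seq (set X)) : (sups_of Y `|` infs_of Y) x ->
  (forall B, B \in Bs -> cons_subbasic B /\ B x) ->
  exists y, Y y /\ forall B, B \in Bs -> B y.
Proof.
move=> [[S [SY S0 hs]]|[S [SY S0 hs]]] HB.
- have [s0 [Ss0 H]] := b_sup S0 hs HB.
  exists s0; split; first exact: SY.
  by move=> B hB; apply: (H s0 Ss0 (@spec_le_refl _ s0) B hB).
- have [s0 [Ss0 H]] := b_inf S0 hs HB.
  by exists s0; split; [exact: SY|move=> B hB; apply: (H s0 Ss0 (@spec_le_refl _ s0) B hB)].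
Qed.

Lemma main (Y : set X) :
  cons_closure Y = sups_of Y `|` infs_of Y /\
  (cons_closed Y <->
     (forall S : set X, S `<=` Y -> S !=set0 ->
        (forall s, is_sup S s -> Y s) /\ (forall s, is_inf S s -> Y s))).
Proof.
split.
  apply/seteqP; split => x.
  - move=> cx; apply: NNPP => nx.
    have [Bs [HB HY]] : exists Bs : seq (set X),
        (forall B, B \in Bs -> cons_subbasic B /\ B x) /\
        (forall y, Y y -> ~ (forall B, B \in Bs -> B y)).
      by apply: a_lemma => H; apply: nx; [left|right].
    pose W := fun y => forall B, B \in Bs -> B y.
    have : (~` W) x.
      apply: cx; split.
      + rewrite /cons_closed setCK => z Wz; exists Bs; split => //.
        by move=> B hB; split; [exact: (HB B hB).1|exact: Wz].
      + by move=> y Yy Wy; exact: HY y Yy Wy.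
    by apply => B hB; exact: (HB B hB).2.
  - move=> hx C [cC YC]; apply: NNPP => nC.
    have [Bs [HB sub]] := cC x nC.
    have [y [Yy Hy]] := b_lemma hx HB.
    exact: sub y Hy (YC y Yy).
split.
- move=> cY S SY S0; split => s hs; apply: NNPP => nY.
  + have [Bs [HB sub]] := cY s nY.
    have [y [Yy Hy]] := @b_lemma Y s Bs (or_introl (ex_intro _ S (And3 SY S0 hs))) HB.
    exact: sub y Hy Yy.
  + have [Bs [HB sub]] := cY s nY.
    have [y [Yy Hy]] := @b_lemma Y s Bs (or_intror (ex_intro _ S (And3 SY S0 hs))) HB.
    exact: sub y Hy Yy.
- move=> H x nY.
  have [Bs [HB HY]] : exists Bs : seq (set X),
      (forall B, B \in Bs -> cons_subbasic B /\ B x) /\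
      (forall y, Y y -> ~ (forall B, B \in Bs -> B y)).
    apply: a_lemma.
    + by move=> [S [SY S0 hs]]; apply: nY; exact: (H S SY S0).1 x hs.
    + by move=> [S [SY S0 hs]]; apply: nY; exact: (H S SY S0).2 x hs.
  exists Bs; split => // y Wy Yy; exact: HY y Yy Wy.
Qed.

End Ring.
Unset Implicit Arguments.

Theorem proposition3p3 (X : topologicalType) (hX : spectral_space X)
  (htot : spec_total X) (Y : set X) :
  cons_closure Y = sups_of Y `|` infs_of Y /\
  (cons_closed Y <->
     (forall S : set X, S `<=` Y -> S !=set0 ->
        (forall s, is_sup S s -> Y s) /\ (forall s, is_inf S s -> Y s))).
Proof.
case: hX => R [h [[g hg gh] hopen]].
exact: (@main X R h g hg gh hopen htot Y).
Qed.
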